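(* Let $n\ge1$, $K\ge1$ and $p_n\in[0,1]$. Let $(\mathcal{G}(n),\mathcal{A}_1(n),\dots,\mathcal{A}_K(n))$ be the output of the Tetris exploration algorithm, and let $\mathcal{N}_i(n)=\{v:h_v(n)=i\}$ be the sets of vertices at height $i$ in the final state of the Tetris model on $G(n,p_n)$ (both described in the context). Then the joint distribution of $(\mathcal{G}(n),\mathcal{A}_1(n),\dots,\mathcal{A}_K(n))$ is identical to that of $(G(n,p_n),\mathcal{N}_1(n),\dots,\mathcal{N}_K(n))$.
   Context: $G(n,p_n)$ is the Erdős–Rényi random graph on $[n]$ with independent edge probability $p_n$. Tetris model: given a realization of $G(n,p_n)$, set $h_v(0)=0$ for all $v$. At step $t+1$ a vertex $u$ is chosen uniformly at random among vertices not selected before; letting $m=\max\{h_w(t):w \text{ a neighbour of } u\}$ (with $m=0$ if $u$ has no neighbours), set $h_u(t+1)=m+1$ if $m<K$ and $h_u(t+1)=0$ otherwise; all other heights are unchanged. Tetris exploration algorithm: maintain $\mathcal{A}_k(t)$ (explored vertices at height $k$, $0\le k\le K$; height 0 meaning frozen) and unexplored set $\mathcal{U}(t)$, initially $\mathcal{A}_k(0)=\varnothing$, $\mathcal{U}(0)=[n]$; $\mathcal{A}(t)=\bigcup_{k=0}^K\mathcal{A}_k(t)$. At step $t+1$, select $v\in\mathcal{U}(t)$ uniformly at random, remove it from $\mathcal{U}$, and join it to each vertex of $\mathcal{A}(t)$ independently with probability $p_n$. Let $j$ be the maximal height among the vertices of $\mathcal{A}(t)$ joined to $v$ ($j=0$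 if none). If $j\le K-1$, $v$ receives height $j+1$ (joins $\mathcal{A}_{j+1}$); otherwise $v$ receives height $0$ (joins $\mathcal{A}_0$). After $n$ steps the algorithm outputs $(\mathcal{A}_1(n),\dots,\mathcal{A}_K(n))$ and the graph $\mathcal{G}(n)$ on $[n]$ of all edges added. *)

(* Defs.v *)
(* Discrete probability: distributions are given by their
   probability mass functions on finite outcome types. *)
From HB Require Import structures.
From mathcomp Require Import all_boot all_order all_algebra.
From mathcomp Require Import reals.
Set Implicit Arguments. Unset Strict Implicit. Unset Printing Implicit Defensive.
Import Order.TTheory GRing.Theory Num.Theory.
Local Open Scope ring_scope.

Section Tetris.
Variables (R : realType) (n K : nat) (p : R).

(* vertices: 'I_n ; heights: 'I_K.+1 (height 0 = frozen / not yet placed) *)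
Definition heights := {ffun 'I_n -> 'I_K.+1}.
Definition h0 : heights := [ffun=> ord0].

(* a simple graph on [n] is a set of 2-element subsets of [n] *)
Definition pairs : {set {set 'I_n}} := [set e : {set 'I_n} | #|e| == 2%N].
Definition graph := {set {set 'I_n}}.

(* outcome: (graph, (set of vertices at height i)_{i=1..K}); index i : 'I_K
   stands for height i+1 *)
Definition outcome := (graph * {ffun 'I_K -> {set 'I_n}})%type.
Definition level_sets (h : heights) : {ffun 'I_K -> {set 'I_n}} :=
  [ffun i : 'I_K => [set v | (h v : nat) == i.+1]].

Definition gnp_pmf (E : graph) : R :=
  if E \subset pairs then \prod_(e in pairs) (if e \in E then p else 1 - p)
  else 0.

Definition new_height (m : nat) : 'I_K.+1 :=
  if (m < K)%N then inord m.+1 else ord0.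

Definition tet_update (E : graph) (h : heights) (u : 'I_n) : heights :=
  let m := (\max_(w | [set u; w] \in E) (h w : nat))%N in
  [ffun v => if v == u then new_height m else h v].

(* probability, starting from unselected set U and heights h, with k steps
   remaining, that the final level sets equal A *)
Fixpoint tet_run (E : graph) (k : nat) (U : {set 'I_n}) (h : heights)
    (A : {ffun 'I_K -> {set 'I_n}}) : R :=
  match k with
  | 0 => ((level_sets h == A) : nat)%:R
  | k'.+1 => \sum_(u in U) (#|U|%:R)^-1 * tet_run E k' (U :\ u) (tet_update E h u) A
  end.

Definition tetris_pmf (o : outcome) : R :=
  gnp_pmf o.1 * tet_run o.1 n setT h0 o.2.

(* state: unexplored set U, heights h of explored vertices (explored set is
   ~: U, A_k(t) = explored vertices of height k), edges E added so far. *)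
Fixpoint alg_run (k : nat) (U : {set 'I_n}) (h : heights) (E : graph)
    (o : outcome) : R :=
  match k with
  | 0 => (((E, level_sets h) == o) : nat)%:R
  | k'.+1 =>
      \sum_(v in U) (#|U|%:R)^-1 *
        \sum_(S : {set 'I_n} | S \subset ~: U)
          p ^+ #|S| * (1 - p) ^+ (#|~: U| - #|S|) *
          alg_run k' (U :\ v)
            [ffun w => if w == v then new_height (\max_(x in S) (h x : nat))%N
                       else h w]
            (E :|: [set [set v; w] | w in S]) o
  end.

Definition alg_pmf (o : outcome) : R := alg_run n setT h0 set0 o.

End Tetris.

(* Main.v *)
Require Import Defs.
From HB Require Import structures.
From mathcomp Require Import all_boot all_order all_algebra.
From mathcomp Require Import reals.
Set Implicit Arguments. Unset Strict Implicit. Unset Printing Implicit Defensive.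
Import Order.TTheory GRing.Theory Num.Theory.
Local Open Scope ring_scope.

Section Aux.
Variable n : nat.
Local Notation V := 'I_n.

Definition inner (U : {set V}) : {set {set V}} :=
  [set e in pairs n | e \subset ~: U].
Definition star (v : V) (S : {set V}) : {set {set V}} := [set [set v; w] | w in S].

Lemma pair_inj (v : V) : injective (fun w : V => [set v; w]).
Proof.
move=> w1 w2 /= H.
have : w1 \in [set v; w2] by rewrite -H !inE eqxx orbT.
rewrite !inE => /orP [/eqP w1v|/eqP //].
have : w2 \in [set v; w1] by rewrite H !inE eqxx orbT.
by rewrite !inE w1v orbb => /eqP ->.
Qed.

Lemma innerS (U : {set V}) (v : V) (e : {set V}) : e \in inner U -> e \in inner (U :\ v).
Proof.
rewrite !inE => /andP [-> /subsetP H] /=; apply/subsetP => x /H.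
by rewrite !inE negb_and => ->; rewrite orbT.
Qed.

Lemma inner_star (U : {set V}) (v w : V) : v \in U -> w \in ~: U ->
  [set v; w] \in inner (U :\ v) /\ [set v; w] \notin inner U.
Proof.
move=> vU; rewrite inE => wU.
have vw : v != w by apply/eqP => E; rewrite -E vU in wU.
split.
  rewrite !inE cards2 vw /= subUset !sub1set !inE.
  idtac.
  by rewrite eqxx (negbTE wU) andbF.
rewrite inE negb_and; apply/orP; right; apply/negP => /subsetP H.
by have := H v; rewrite !inE eqxx vU => /(_ isT).
Qed.

Lemma inner_decomp (U : {set V}) (v : V) (e : {set V}) : e \in inner (U :\ v) -> e \notin inner U ->
  exists2 w, w \in ~: U & e = [set v; w].
Proof.
rewrite !inE => /andP [/cards2P [x [y [xy ->]]] sub].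
rewrite cards2 xy /= => nsub.
move: sub; rewrite subUset !sub1set !inE !negb_and !negbK.
case/andP => hx hy.
case: (boolP (x \in U)) => xU; last first.
  case: (boolP (y \in U)) => yU; last first.
    by move: nsub; rewrite subUset !sub1set !inE xU yU.
  move: hy; rewrite yU orbF => /eqP yv.
  by exists x; rewrite ?inE // yv setUC.
move: hx; rewrite xU orbF => /eqP xv.
exists y; last by rewrite xv.
rewrite inE; apply/negP => yU; move: hy; rewrite yU orbF => /eqP yv.
by move: xy; rewrite xv yv eqxx.
Qed.

Lemma mem_star (v w : V) (S : {set V}) : ([set v; w] \in star v S) = (w \in S).
Proof.
apply/imsetP/idP => [[w' w'S /pair_inj ->] //| wS]; by exists w.
Qed.

End Aux.

Section Main.
Variables (R : realType) (n K : nat) (p : R).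
Local Notation V := 'I_n.

Definition wtE (E : graph n) (D : {set {set V}}) : R :=
  \prod_(e in D) (if e \in E then p else 1 - p).

Lemma key_eq (U : {set V}) (v : V) (S : {set V}) (E0 E : graph n) :
  v \in U -> S \subset ~: U -> E0 \subset inner U ->
  (E :&: inner (U :\ v) == E0 :|: star v S) =
  (E :&: inner U == E0) && (S == [set w in ~: U | [set v; w] \in E]).
Proof.
move=> vU SU /subsetP E0U.
have starU : forall e, e \in star v S -> e \notin inner U.
  move=> e /imsetP [w wS ->]; have wU := subsetP SU w wS.
  by case: (inner_star vU wU).
apply/idP/idP.
  move=> /eqP /setP H; apply/andP; split.
    apply/eqP/setP => e; rewrite inE.
    case eU: (e \in inner U); last first.
      by rewrite andbF; apply/esym/negP => /E0U; rewrite eU.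
    have := H e; rewrite inE (innerS v eU) andbT => ->.
    rewrite in_setU.
    case: (boolP (e \in star v S)) => es; last by rewrite orbF.
    by have := starU e es; rewrite eU.
  apply/eqP/setP => w; rewrite inE.
  case: (boolP (w \in ~: U)) => wU /=; last first.
    by apply/negP => /(subsetP SU); rewrite (negbTE wU).
  have [h1 h2] := inner_star vU wU.
  have := H [set v; w]; rewrite in_setI h1 andbT => ->.
  rewrite in_setU.
  have -> : ([set v; w] \in E0) = false by apply/negP => /E0U; rewrite (negbTE h2).
  by rewrite /= mem_star.
case/andP => /eqP /setP H1 /eqP H2.
apply/eqP/setP => e; rewrite in_setI in_setU.
case eU: (e \in inner U).
  rewrite (innerS v eU) andbT.
  have := H1 e; rewrite in_setI eU andbT => ->.
  case: (boolP (e \in star v S)) => es; last by rewrite orbF.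
  by have := starU e es; rewrite eU.
have -> : (e \in E0) = false by apply/negP => /E0U; rewrite eU.
case eU': (e \in inner (U :\ v)); last first.
  rewrite andbF /=; apply/esym/negP => /imsetP [w wS ew].
  have [h1 _] := inner_star vU (subsetP SU w wS).
  by move: eU'; rewrite ew h1.
rewrite andbT /=.
have [w wU ->] := inner_decomp eU' (negbT eU).
rewrite mem_star.
by rewrite H2 inE wU.
Qed.


Lemma wsplit (U : {set V}) (v : V) (E : graph n) : v \in U ->
  wtE E (pairs n :\: inner U) =
  wtE E (pairs n :\: inner (U :\ v)) * wtE E (star v (~: U)).
Proof.
move=> vU; rewrite /wtE (bigID (fun e => e \in inner (U :\ v))) /= mulrC.
congr (_ * _).
  apply: eq_bigl => e; rewrite !in_setD.
  case: (boolP (e \in inner (U :\ v))) => eU' /=; first by rewrite andbF.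
  rewrite andbT; case: (boolP (e \in inner U)) => //= eU.
  by move: eU'; rewrite (innerS v eU).
apply: eq_bigl => e; rewrite in_setD.
apply/idP/idP.
  case/andP => /andP [eU _] eU'.
  have [w wU ->] := inner_decomp eU' eU.
  by rewrite mem_star.
move=> /imsetP [w wU ->].
have [h1 h2] := inner_star vU wU.
rewrite h1 h2 andbT /=.
by move: h1; rewrite inE => /andP [].
Qed.

Lemma wstar (U : {set V}) (v : V) (E : graph n) :
  wtE E (star v (~: U)) =
  p ^+ #|[set w in ~: U | [set v; w] \in E]| *
  (1 - p) ^+ (#|~: U| - #|[set w in ~: U | [set v; w] \in E]|).
Proof.
rewrite /wtE /star big_imset /=; last by move=> x y _ _; apply: pair_inj.
rewrite (bigID (fun w => [set v; w] \in E)) /=.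
rewrite (eq_bigr (fun _ => p)); last by move=> w /andP [_ ->].
rewrite [X in _ * X](eq_bigr (fun _ => 1 - p)); last by move=> w /andP [_ /negbTE ->].
rewrite !prodr_const.
set S := [set w in ~: U | _].
have cS : #|S| = #|[pred w in ~: U | [set v; w] \in E]|.
  by apply: eq_card => w; rewrite !inE.
have := cardID [pred w | [set v; w] \in E] (~: U).
rewrite -cS => <-; rewrite addKn.
congr (_ * _); congr (_ ^+ _); apply: eq_card => w; rewrite !inE.
by rewrite unfold_in /= inE andbC.
Qed.

Lemma hS (U : {set V}) (v : V) (E : graph n) (h : heights n K) :
  (forall w, w \in U -> h w = ord0) ->
  [ffun w => if w == v then
     new_height K (\max_(x in [set w in ~: U | [set v; w] \in E]) (h x : nat))%N
   else h w] = tet_update E h v.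
Proof.
move=> h0; rewrite /tet_update; apply/ffunP => w; rewrite !ffunE.
case: ifP => // _; congr new_height.
rewrite big_mkcond [RHS]big_mkcond; apply: eq_bigr => x _; rewrite !inE.
case: (boolP (x \in U)) => xU //=.
by rewrite h0 //; case: ifP.
Qed.

Lemma inv (k : nat) : forall (U : {set V}) (h : heights n K) (E0 E : graph n) A,
  #|U| = k -> (forall w, w \in U -> h w = ord0) -> E0 \subset inner U ->
  alg_run p k U h E0 (E, A) =
  ((E \subset pairs n) && (E :&: inner U == E0))%:R *
  wtE E (pairs n :\: inner U) * tet_run R E k U h A.
Proof.
elim: k => [|k IH] U h E0 E A cU h0 sub.
  move/eqP: cU; rewrite cards_eq0 => /eqP U0.
  have i0 : inner U = pairs n.
    by apply/setP => e; rewrite U0 !inE setC0 subsetT andbT.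
  rewrite i0 setDv /wtE big_set0 mulr1 /=.
  move: sub; rewrite i0 => sub.
  have -> : ((E0, level_sets h) == (E, A)) = (E0 == E) && (level_sets h == A) by [].
  have -> : (E0 == E) = (E \subset pairs n) && (E :&: pairs n == E0).
    apply/idP/idP.
      by move/eqP <-; rewrite sub /=; apply/eqP/setIidPl.
    case/andP => /setIidPl -> /eqP ->; by [].
  by case: ((E \subset pairs n) && _); case: (level_sets h == A); rewrite /= ?mul1r ?mul0r ?mulr1 ?mulr0.
have Uk : forall v, v \in U -> #|U :\ v| = k.
  by move=> v vU; move: cU; rewrite (cardsD1 v) vU => -[].
rewrite /= mulr_sumr; apply: eq_bigr => v vU.
rewrite mulrCA; congr (_ * _).
set Sst := [set w in ~: U | [set v; w] \in E].
set c := ((E \subset pairs n) && (E :&: inner U == E0)).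
have term : forall S : {set V}, S \subset ~: U ->
  p ^+ #|S| * (1 - p) ^+ (#|~: U| - #|S|) *
  alg_run p k (U :\ v)
    [ffun w => if w == v then new_height K (\max_(x in S) (h x : nat))%N else h w]
    (E0 :|: [set [set v; w] | w in S]) (E, A) =
  (S == Sst)%:R * (c%:R * wtE E (pairs n :\: inner U) *
     tet_run R E k (U :\ v) (tet_update E h v) A).
  move=> S SU.
  rewrite IH; first last.
  - rewrite subUset; apply/andP; split.
      by apply/subsetP => e /(subsetP sub) /(innerS v).
    apply/subsetP => e /imsetP [w wS ->].
    by case: (inner_star vU (subsetP SU w wS)).
  - move=> w; rewrite in_setD1 => /andP [wv wU]; rewrite ffunE (negbTE wv).
    exact: h0.
  - exact: Uk.
  have := key_eq E vU SU sub; rewrite /star => ->.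
  case: (S =P Sst) => [->|_]; last by rewrite !andbF /= !mul0r ?mulr0.
  rewrite !andbT mul1r (hS v E h0) (wsplit E vU) wstar -/Sst -/c.
  rewrite mulrA; congr (_ * _); rewrite mulrCA; congr (_ * _); exact: mulrC.
rewrite (eq_bigr _ term) (bigD1 Sst) /=; last first.
  by apply/subsetP => w; rewrite inE => /andP [].
rewrite eqxx mul1r big1 ?addr0 // => S /andP [_ /negbTE ->].
by rewrite mul0r.
Qed.
End Main.

Theorem proposition2 (R : realType) (n K : nat) (p : R) :
  (1 <= n)%N -> (1 <= K)%N -> 0 <= p <= 1 ->
  forall o : outcome n K, @alg_pmf R n K p o = @tetris_pmf R n K p o.
Proof.
move=> _ _ _ [E A].
rewrite /alg_pmf /tetris_pmf /=.
rewrite (inv (R:=R) p (k:=n) (U:=setT) (E0:=set0) E A); first last.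
- exact: sub0set.
- by move=> w _; rewrite ffunE.
- by rewrite cardsT card_ord.
have -> : inner [set: 'I_n] = set0.
  apply/setP => e; rewrite !inE setCT subset0.
  case e2: (#|e| == 2) => //=; apply/negP => /eqP e0.
  by rewrite e0 cards0 in e2.
rewrite setI0 eqxx andbT setD0 /gnp_pmf /wtE.
by case: (E \subset pairs n); rewrite /= ?mul1r ?mul0r.
Qed.
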